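(* Let $d\ge 2$ and $1\le k\le d^2$ be integers. Let $A,B,C,D$ be quantum systems, each with Hilbert space $\mathbb{C}^d$, and let $\psi^+_{XY}=|\psi^+\rangle\langle\psi^+|_{XY}$ with $|\psi^+\rangle=\frac{1}{\sqrt d}\sum_{i=0}^{d-1}|i\rangle|i\rangle$ denote the maximally entangled state on a pair of such systems $X,Y$. For a POVM $\{M^{(i)}_{DA}\}_{i=1}^{k}$ on $DA$ (i.e. $M^{(i)}_{DA}\ge 0$ and $\sum_{i=1}^k M^{(i)}_{DA}=\mathbf 1_{DA}$) and unitaries $\{U^{(i)}_B\}_{i=1}^k$ on $B$, define $$F\big(\{M^{(i)}_{DA},U^{(i)}_B\}\big)=\sum_{i=1}^{k}\operatorname{tr}\Big[\psi^+_{CB}\,U^{(i)}_B\,\operatorname{tr}_{AD}\big[(M^{(i)}_{DA}\otimes\mathbf 1_{CB})(\psi^+_{AB}\otimes\psi^+_{CD})\big]\,U^{(i)\dagger}_B\Big].$$ Then $$\max_{\{M^{(i)}_{DA},U^{(i)}_B\}} F\big(\{M^{(i)}_{DA},U^{(i)}_B\}\big)=\frac{k}{d^2},$$ where the maximum runs over all $k$-outcome POVMs on $DA$ and all choices of unitaries on $B$.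
   Context: This quantity is the entanglement fidelity of a teleportation protocol in which Alice measures $DA$ with a $k$-outcome POVM, communicates the outcome $i$ to Bob, and Bob applies the correction $U^{(i)}_B$; the goal is for $C$ and $B$ to end up maximally entangled. *)

(* Defs.v *)
(* Scalars: an arbitrary numClosedFieldType C (e.g. the
   complex numbers R[i] over a real closed / real field, or algC).
   Operators on a finite-dimensional Hilbert space with orthonormal basis
   indexed by a finType T are represented by their matrix entries
   X : T -> T -> C  (X i j = <i|X|j>). *)
From mathcomp Require Import all_boot all_order all_algebra.
Set Implicit Arguments. Unset Strict Implicit. Unset Printing Implicit Defensive.
Import Order.TTheory GRing.Theory Num.Theory.
Local Open Scope ring_scope.

Section Ops.
Variable C : numClosedFieldType.

Definition op (T : finType) := T -> T -> C.

Definition oneo (T : finType) : op T := fun i j => (i == j)%:R.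
Definition mulo (T : finType) (X Y : op T) : op T :=
  fun i j => \sum_(l : T) X i l * Y l j.
Definition adjo (T : finType) (X : op T) : op T := fun i j => (X j i)^*.
Definition tro (T : finType) (X : op T) : C := \sum_(i : T) X i i.
Definition psd (T : finType) (X : op T) : Prop :=
  forall v : T -> C, 0 <= \sum_(i : T) \sum_(j : T) (v i)^* * X i j * v j.
Definition unitary (T : finType) (U : op T) : Prop :=
  (forall i j, mulo U (adjo U) i j = oneo i j) /\
  (forall i j, mulo (adjo U) U i j = oneo i j).
Definition povm (T : finType) (k : nat) (M : 'I_k -> op T) : Prop :=
  (forall i, psd (M i)) /\ (forall x y, \sum_(i < k) M i x y = oneo x y).
Definition tenso (S T : finType) (X : op S) (Y : op T) : op (S * T)%type :=
  fun p q => X p.1 q.1 * Y p.2 q.2.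
Definition proj (T : finType) (v : T -> C) : op T := fun i j => v i * (v j)^*.

Definition psiplus_vec (d : nat) : ('I_d * 'I_d)%type -> C :=
  fun p => (p.1 == p.2)%:R / sqrtC d%:R.
Definition psiplus (d : nat) : op ('I_d * 'I_d)%type := proj (@psiplus_vec d).

(* The four systems A,B,C,D, each C^d.  Joint index ordered (a, b, c, dd). *)
Definition idx4 (d : nat) := ('I_d * 'I_d * 'I_d * 'I_d)%type.

Definition state_ABCD (d : nat) : op (idx4 d) :=
  fun p q =>
    let: (a, b, c, dd) := p in let: (a', b', c', dd') := q in
    @psiplus d (a, b) (a', b') * @psiplus d (c, dd) (c', dd').

(* M_{DA} (x) 1_{CB}, as an operator on ABCD (M indexed by (dd, a)) *)
Definition embed_DA (d : nat) (M : op ('I_d * 'I_d)%type) : op (idx4 d) :=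
  fun p q =>
    let: (a, b, c, dd) := p in let: (a', b', c', dd') := q in
    M (dd, a) (dd', a') * oneo b b' * oneo c c'.

(* partial trace over A and D; result is an operator on CB, indexed (c, b) *)
Definition ptr_AD (d : nat) (X : op (idx4 d)) : op ('I_d * 'I_d)%type :=
  fun p q =>
    let: (c, b) := p in let: (c', b') := q in
    \sum_(a : 'I_d) \sum_(dd : 'I_d) X (a, b, c, dd) (a, b', c', dd).

Definition onB (d : nat) (U : op 'I_d) : op ('I_d * 'I_d)%type := tenso (@oneo _) U.

Definition fidelity (d k : nat) (M : 'I_k -> op ('I_d * 'I_d)%type)
  (U : 'I_k -> op 'I_d) : C :=
  \sum_(i < k)
    tro (mulo (@psiplus d)
          (mulo (onB (U i))
            (mulo (ptr_AD (mulo (embed_DA (M i)) (@state_ABCD d)))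
                  (adjo (onB (U i)))))).

End Ops.

(* Main.v *)
Require Import Defs.
From mathcomp Require Import all_boot all_order all_algebra.
From mathcomp Require Import cyclic separable cyclotomic.
From mathcomp Require Import ring.
Set Implicit Arguments. Unset Strict Implicit. Unset Printing Implicit Defensive.
Import Order.TTheory GRing.Theory Num.Theory.
Local Open Scope ring_scope.

Section Work.
Variable C : numClosedFieldType.

Lemma prim_root_ex n : (n > 0)%N -> exists z : C, n.-primitive_root z.
Proof.
pose p : {poly C} := 'X^n - 1; have [r Dp] := closed_field_poly_normal p.
move=> n_gt0; rewrite (monicP _) ?monicXnsubC // scale1r in Dp.
have rn1: all n.-unity_root r by apply/allP=> z; rewrite -root_prod_XsubC -Dp.
have sz_r: (n < (size r).+1)%N.
  by rewrite -(size_prod_XsubC r id) -Dp size_XnsubC.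
have [|z] := hasP (has_prim_root n_gt0 rn1 _ sz_r); last by exists z.
by rewrite -separable_prod_XsubC -Dp separable_Xn_sub_1 // pnatr_eq0 -lt0n.
Qed.

Lemma sum_collapse (T : finType) (i : T) (F : T -> C) :
  (forall j, j != i -> F j = 0) -> \sum_j F j = F i.
Proof. by move=> H; rewrite (bigD1 i) //= big1 ?addr0. Qed.
Arguments sum_collapse {T} i {F}.

Lemma sum_delta (T : finType) (i : T) (F : T -> C) :
  \sum_j (i == j)%:R * F j = F i.
Proof.
rewrite (sum_collapse i) ?eqxx ?mul1r // => j hj.
by rewrite eq_sym (negbTE hj) mul0r.
Qed.

Lemma sumP2 (T1 T2 : finType) (F : (T1 * T2)%type -> C) :
  \sum_p F p = \sum_a \sum_b F (a, b).
Proof. by rewrite (pair_bigA _ (fun a b => F (a, b))); apply: eq_bigr => -[]. Qed.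


Lemma psiE d (x y : ('I_d * 'I_d)%type) :
  @psiplus C d x y = (x.1 == x.2)%:R * (y.1 == y.2)%:R / d%:R.
Proof.
rewrite /psiplus /proj /psiplus_vec rmorphM /= conjC_nat fmorphV /=.
rewrite geC0_conj ?sqrtC_ge0 ?ler0n //.
by rewrite mulrACA -invfM -expr2 sqrtCK.
Qed.

Lemma sum4 d (F : idx4 d -> C) :
  \sum_l F l = \sum_b1 \sum_c1 \sum_a1 \sum_d1 F (a1, b1, c1, d1).
Proof.
rewrite sumP2 sumP2 sumP2 exchange_big; apply: eq_bigr => b1 _.
by rewrite exchange_big.
Qed.

Ltac kill := let j := fresh "j" in let hj := fresh "hj" in let hj2 := fresh "hk" in
  intros j hj; have hj2 := hj; rewrite eq_sym in hj2;
  rewrite /=; repeat (first [rewrite sum4 | progress rewrite /mulo | apply: big1 => ? _]);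
  rewrite /= ?psiE /oneo /= ?(negbTE hj) ?(negbTE hj2) /= ?mulr0n;
  rewrite !(mulr0, mul0r, rmorph0).

Lemma rhoE d (M : op C ('I_d * 'I_d)%type) (p q : ('I_d * 'I_d)%type) :
  ptr_AD (mulo (embed_DA M) (@state_ABCD C d)) p q = M q p / (d%:R ^+ 2).
Proof.
case: p => c b; case: q => c' b'; rewrite /ptr_AD.
rewrite (sum_collapse b'); last by kill.
rewrite (sum_collapse c'); last by kill.
rewrite /mulo sum4.

rewrite (sum_collapse b); last by kill.
rewrite (sum_collapse c); last by kill.
rewrite (sum_collapse b); last by kill.
rewrite (sum_collapse c); last by kill.
rewrite /= !psiE /oneo /= !eqxx /= !mulr1n.
by rewrite !mulr1 !mul1r expr2 invfM.
Qed.


Definition quad (T : finType) (X : op C T) (v : T -> C) :=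
  \sum_x \sum_y (v x)^* * X x y * v y.

Lemma quad_extv (T : finType) (X : op C T) v w :
  (forall x, v x = w x) -> quad X v = quad X w.
Proof.
by move=> H; apply: eq_bigr => x _; apply: eq_bigr => y _; rewrite !H.
Qed.

Lemma quad_extX (T : finType) (X Y : op C T) v :
  (forall x y, X x y = Y x y) -> quad X v = quad Y v.
Proof.
by move=> H; apply: eq_bigr => x _; apply: eq_bigr => y _; rewrite !H.
Qed.

Lemma tro_proj (T : finType) (v : T -> C) (X : op C T) :
  tro (mulo (proj v) X) = quad X v.
Proof.
rewrite /tro /mulo /proj /quad exchange_big.
apply: eq_bigr => l _; apply: eq_bigr => i _; ring.
Qed.

Lemma quad_sand (T : finType) (A B : op C T) v :
  quad (mulo A (mulo B (adjo A))) v = quad B (fun q => \sum_y (A y q)^* * v y).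
Proof.
rewrite /quad /mulo /adjo.
transitivity (\sum_p \sum_q \sum_x \sum_y (v x)^* * A x p * B p q * (A y q)^* * v y).
  transitivity (\sum_x \sum_y \sum_p \sum_q (v x)^* * A x p * B p q * (A y q)^* * v y).
    apply: eq_bigr => x _; apply: eq_bigr => y _.
    rewrite big_distrr big_distrl /=; apply: eq_bigr => p _.
    rewrite big_distrr /= big_distrr /= big_distrl /=; apply: eq_bigr => q _.
    ring.
  under eq_bigr => x _ do rewrite exchange_big.
  rewrite exchange_big; apply: eq_bigr => p _.
  under eq_bigr => x _ do rewrite exchange_big.
  by rewrite exchange_big.
apply: eq_bigr => p _; apply: eq_bigr => q _.
rewrite rmorph_sum big_distrl /= big_distrl /=; apply: eq_bigr => x _.
rewrite big_distrr /=; apply: eq_bigr => y _.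
rewrite rmorphM /= conjCK; ring.
Qed.


Lemma wE d (U : op C 'I_d) (q : ('I_d * 'I_d)%type) :
  \sum_y (onB U y q)^* * @psiplus_vec C d y = (U q.1 q.2)^* / sqrtC d%:R.
Proof.
case: q => c b; rewrite sumP2 /onB /tenso /psiplus_vec /=.
rewrite (sum_collapse c); last by kill.
rewrite (sum_collapse c); last by kill.
by rewrite /oneo eqxx /= !mul1r.
Qed.

Lemma fid_term d (M : op C ('I_d * 'I_d)%type) (U : op C 'I_d) :
  tro (mulo (@psiplus C d)
          (mulo (onB U)
            (mulo (ptr_AD (mulo (embed_DA M) (@state_ABCD C d)))
                  (adjo (onB U))))) =
  quad M (fun x => U x.1 x.2) / d%:R ^+ 3.
Proof.
rewrite /psiplus tro_proj quad_sand.
rewrite (quad_extv _ (wE U)) (quad_extX _ (rhoE M)).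
rewrite /quad big_distrl /= exchange_big; apply: eq_bigr => p _.
rewrite big_distrl /=; apply: eq_bigr => q _.
rewrite rmorphM /= conjCK fmorphV /= geC0_conj ?sqrtC_ge0 ?ler0n //.
set s := sqrtC _.
have -> : (d%:R : C) = s ^+ 2 by rewrite sqrtCK.
rewrite -!exprM -!exprVn; ring.
Qed.

Lemma fidE d k (M : 'I_k -> op C ('I_d * 'I_d)%type) (U : 'I_k -> op C 'I_d) :
  fidelity M U = \sum_i quad (M i) (fun x => U i x.1 x.2) / d%:R ^+ 3.
Proof. by apply: eq_bigr => i _; rewrite fid_term. Qed.


Lemma quad_sum (T I : finType) (X : I -> op C T) (c : I -> C) v :
  quad (fun x y => \sum_i c i * X i x y) v = \sum_i c i * quad (X i) v.
Proof.
rewrite /quad; transitivity (\sum_x \sum_y \sum_i c i * ((v x)^* * X i x y * v y)).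
  apply: eq_bigr => x _; apply: eq_bigr => y _.
  rewrite big_distrr big_distrl /=; apply: eq_bigr => i _; ring.
under eq_bigr => x _ do rewrite exchange_big /=.
rewrite exchange_big /=; apply: eq_bigr => i _.
rewrite big_distrr /=; apply: eq_bigr => x _.
by rewrite big_distrr.
Qed.

Lemma quad_sum1 (T I : finType) (X : I -> op C T) v :
  quad (fun x y => \sum_i X i x y) v = \sum_i quad (X i) v.
Proof.
rewrite (quad_extX _ (Y := fun x y => \sum_i 1 * X i x y)); last first.
  by move=> x y; apply: eq_bigr => i _; rewrite mul1r.
by rewrite quad_sum; apply: eq_bigr => i _; rewrite mul1r.
Qed.

Lemma quad_one (T : finType) (v : T -> C) :
  quad (@oneo C T) v = \sum_x (v x)^* * v x.
Proof.
apply: eq_bigr => x _; rewrite (sum_collapse x) /oneo ?eqxx ?mulr1 //.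
by move=> j hj; rewrite eq_sym (negbTE hj) mulr0 mul0r.
Qed.

Lemma normU d (U : op C 'I_d) : unitary U ->
  \sum_(x : ('I_d * 'I_d)%type) (U x.1 x.2)^* * U x.1 x.2 = d%:R.
Proof.
case=> H1 _; rewrite sumP2 /=.
rewrite (eq_bigr (fun _ => 1)) ?sumr_const ?card_ord //.
move=> c _; transitivity (mulo U (adjo U) c c); last by rewrite H1 /oneo eqxx.
by apply: eq_bigr => b _; rewrite mulrC.
Qed.

Lemma quad_le_d d k (M : 'I_k -> op C ('I_d * 'I_d)%type) (U : op C 'I_d) i :
  povm M -> unitary U -> quad (M i) (fun x => U x.1 x.2) <= d%:R.
Proof.
case=> Hpsd Hsum HU.
have <- : \sum_j quad (M j) (fun x => U x.1 x.2) = d%:R.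
  by rewrite -quad_sum1 (quad_extX _ Hsum) quad_one normU.
rewrite (bigD1 i) //= lerDl sumr_ge0 // => j _; exact: Hpsd.
Qed.

Lemma upper d k (M : 'I_k -> op C ('I_d * 'I_d)%type) (U : 'I_k -> op C 'I_d) :
  (0 < d)%N -> povm M -> (forall i, unitary (U i)) ->
  fidelity M U <= k%:R / (d ^ 2)%:R.
Proof.
move=> d0 HM HU; rewrite fidE.
apply: (@le_trans _ _ (\sum_(i < k) d%:R / d%:R ^+ 3)).
  apply: ler_sum => i _; apply: ler_wpM2r; last exact: quad_le_d.
  by rewrite invr_ge0 exprn_ge0 ?ler0n.
rewrite sumr_const card_ord -mulr_natl natrX.
have hd : (d%:R : C) != 0 by rewrite pnatr_eq0 -lt0n.
rewrite le_eqVlt; apply/orP; left; apply/eqP; field; exact: hd.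
Qed.


Lemma quad_rank1 (T : finType) (u v : T -> C) (c : C) :
  quad (fun x y => u x * (u y)^* * c) v =
  (\sum_x (v x)^* * u x) * (\sum_y (v y)^* * u y)^* * c.
Proof.
rewrite /quad rmorph_sum big_distrl big_distrl /=; apply: eq_bigr => x _.
rewrite big_distrr big_distrl /=; apply: eq_bigr => y _.
rewrite rmorphM /= conjCK; ring.
Qed.

Lemma geo0 (z : C) m : z ^+ m = 1 -> z != 1 -> \sum_(s < m) z ^+ s = 0.
Proof.
move=> hz hz1; have := subrX1 z m; rewrite hz subrr => /esym/eqP.
by rewrite mulf_eq0 subr_eq0 (negbTE hz1) /= => /eqP.
Qed.

Section Constr.
Variable n : nat.
Local Notation d := n.+2.
Variable w : C.
Hypothesis hw : d.-primitive_root w.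

Definition V (s t : 'I_d) : op C 'I_d := fun x y => (x - y == t)%:R * w ^+ (y * s).

Lemma normw : `|w| = 1.
Proof.
apply/eqP; rewrite -(@pexpr_eq1 _ _ d) // -normrX (prim_expr_order hw).
by rewrite normr1.
Qed.

Lemma wnorm m : w ^+ m * (w ^+ m)^* = 1.
Proof. by rewrite -normCK normrX normw !expr1n. Qed.

Lemma keyE2 (x y t : 'I_d) : (x - y == t) = (y == x - t).
Proof. by rewrite [RHS]eq_sym !subr_eq addrC. Qed.

Lemma V_unitary s t : unitary (V s t).
Proof.
split=> x x'.
  rewrite /mulo /adjo /V.
  under eq_bigr => y _ do rewrite !keyE2.
  rewrite (sum_collapse (x - t)); last first.
    by move=> j hj; rewrite (negbTE hj) !mul0r.
  rewrite eqxx (inj_eq (addIr _)) /oneo rmorphM /= conjC_nat.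
  case: (x == x') => /=; last by rewrite !mul0r mulr0.
  by rewrite !mul1r wnorm.
rewrite /mulo /adjo /V.
under eq_bigr => y _ do rewrite !subr_eq.
rewrite (sum_collapse (t + x)); last first.
  by move=> j hj; rewrite (negbTE hj) !mul0r rmorph0 mul0r.
rewrite eqxx (inj_eq (addrI _)) /oneo rmorphM /= conjC_nat.
case: eqP => [<-|_] /=; last by rewrite !mul0r mulr0.
by rewrite !mul1r mulrC wnorm.
Qed.

Definition Vt (g : ('I_d * 'I_d)%type) (x : ('I_d * 'I_d)%type) : C :=
  V g.1 g.2 x.1 x.2.

Definition P (g : ('I_d * 'I_d)%type) : op C ('I_d * 'I_d)%type :=
  fun x y => Vt g x * (Vt g y)^* * (d%:R)^-1.

Lemma P_psd g : psd (P g).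
Proof.
move=> v; rewrite -/(quad (P g) v) /P quad_rank1.
by rewrite mulr_ge0 ?mul_conjC_ge0 // invr_ge0 ler0n.
Qed.

Lemma z_pow (a b : nat) : (w ^+ a * (w ^+ b)^*) ^+ d = 1.
Proof.
rewrite exprMn -rmorphXn -!exprM mulnC exprM (prim_expr_order hw) expr1n.
by rewrite mulnC exprM (prim_expr_order hw) expr1n rmorph1 mulr1.
Qed.

Lemma z_neq1 (a b : 'I_d) : a != b -> w ^+ a * (w ^+ b)^* != 1.
Proof.
move=> hab; apply/negP => /eqP hz.
have : w ^+ a = w ^+ b.
  by rewrite -[LHS]mulr1 -(wnorm b) mulrCA hz mulr1.
move/eqP; rewrite (eq_prim_root_expr hw) !modn_small // => hab'.
by move/negP: hab; apply; apply/eqP/val_inj/eqP.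
Qed.

Lemma P_complete x y : \sum_g P g x y = @oneo C _ x y.
Proof.
case: x => x1 x2; case: y => y1 y2.
rewrite sumP2 exchange_big /P /Vt /V /=.
rewrite (sum_collapse (x1 - x2)); last first.
  move=> j hj; rewrite eq_sym in hj; apply: big1 => s _.
  by rewrite (negbTE hj) !mul0r.
transitivity ((y1 - y2 == x1 - x2)%:R *
   (\sum_(s < d) (w ^+ x2 * (w ^+ y2)^*) ^+ s) / d%:R).
  rewrite big_distrr big_distrl /=; apply: eq_bigr => s _.
  rewrite exprMn -rmorphXn -!exprM eqxx rmorphM /= conjC_nat; ring.
rewrite /oneo xpair_eqE.
case: (eqVneq x2 y2) => [<-|hne].
  rewrite wnorm (eq_bigr (fun _ => 1)) ?sumr_const ?card_ord; last first.
    by move=> s _; rewrite expr1n.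
  rewrite (inj_eq (addIr _)) eq_sym andbT.
  have hd : (d%:R : C) != 0 by rewrite pnatr_eq0.
  by rewrite -[1 *+ d]/(d%:R) mulfK.
rewrite geo0 ?z_pow ?z_neq1 // andbF /=.
by rewrite mulr0 mul0r.
Qed.


Lemma exists_opt k' (hk : (k'.+1 <= #|{: 'I_d * 'I_d}|)%N) :
  exists (M : 'I_k'.+1 -> op C ('I_d * 'I_d)%type) (U : 'I_k'.+1 -> op C 'I_d),
      povm M /\ (forall i, unitary (U i)) /\
      fidelity M U = k'.+1%:R / (d ^ 2)%:R.
Proof.
pose g (i : 'I_k'.+1) : ('I_d * 'I_d)%type := enum_val (widen_ord hk i).
pose h (p : ('I_d * 'I_d)%type) : 'I_k'.+1 := inord (minn (enum_rank p) k').
pose M i : op C ('I_d * 'I_d)%type := fun x y => \sum_p (h p == i)%:R * P p x y.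
pose U i := V (g i).1 (g i).2.
have hg i : h (g i) = i.
  apply/val_inj; rewrite /h /g enum_valK /= (minn_idPl (leq_ord i)).
  by rewrite inordK // ltnS leq_ord.
have hM : povm M.
  split.
    move=> i v; change (0 <= quad (M i) v).
    rewrite /M (quad_sum P (fun p => (h p == i)%:R)).
    by apply: sumr_ge0 => p _; rewrite mulr_ge0 ?ler0n //; apply: P_psd.
  move=> x y; rewrite /M exchange_big /= -P_complete.
  by apply: eq_bigr => p _; rewrite (sum_delta (h p) (fun _ => P p x y)).
have hU i : unitary (U i) by apply: V_unitary.
exists M, U; split=> //; split=> //.
have hd : (d%:R : C) != 0 by rewrite pnatr_eq0.
have hq i : quad (M i) (fun x => U i x.1 x.2) = d%:R.
  apply/eqP; rewrite eq_le; apply/andP; split; first exact: quad_le_d.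
  rewrite /M (quad_sum P (fun p => (h p == i)%:R)) (bigD1 (g i)) //= hg eqxx mul1r.
  have -> : quad (P (g i)) (fun x => U i x.1 x.2) = d%:R.
    rewrite /P quad_rank1 /Vt /U /= (normU (hU i)) conjC_nat.
    by rewrite mulfK.
  by rewrite lerDl sumr_ge0 // => p _; rewrite mulr_ge0 ?ler0n //; apply: P_psd.
rewrite fidE (eq_bigr (fun _ => d%:R / d%:R ^+ 3)); last by move=> i _; rewrite hq.
rewrite sumr_const card_ord -mulr_natl natrX; field; by have := hd; rewrite -addn2 natrD addrC.
Qed.

End Constr.

End Work.

Theorem proposition1 (C : numClosedFieldType) (d k : nat) :
  (2 <= d)%N -> (1 <= k)%N -> (k <= d ^ 2)%N ->
  (forall (M : 'I_k -> op C ('I_d * 'I_d)%type) (U : 'I_k -> op C 'I_d),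
      povm M -> (forall i, unitary (U i)) ->
      fidelity M U <= k%:R / (d ^ 2)%:R) /\
  (exists (M : 'I_k -> op C ('I_d * 'I_d)%type) (U : 'I_k -> op C 'I_d),
      povm M /\ (forall i, unitary (U i)) /\
      fidelity M U = k%:R / (d ^ 2)%:R).
Proof.
move=> hd hk1 hk2; split.
  by move=> M U HM HU; apply: upper => //; apply: leq_trans hd.
case: d hd hk2 => [|[|n]] // _ hk2.
case: k hk1 hk2 => [|k'] // _ hk2.
have [w hw] := @prim_root_ex C n.+2 isT.
apply: (exists_opt hw).
by rewrite card_prod !card_ord mulnn.
Qed.
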